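(* Let $Y$ be a sofic shift and $(G,L_G)$ a right-resolving and regular labeled graph presenting $Y$. Then there is a labeled-graph homomorphism $\theta : (G,L_G) \to (\mathbb K(Y), L_{\mathbb K(Y)})$ such that the induced sliding block code satisfies $\theta(\mathcal R(L_G)) \subseteq \mathcal R(L_{\mathbb K(Y)})$. If $(G,L_G)$ is also follower-separated, then $\theta : G \to \mathbb K(Y)$ is injective.
   Context: A labeled graph $(G,L_G)$: finite directed graph (vertices $V_G$, edges $E_G$, source/terminal maps $s_G,t_G$) without sinks or sources, labeling $L_G:E_G\to A$, edge shift $X_G$; $L_G$ acts coordinatewise; presents $Y=L_G(X_G)$. Right-resolving: distinct edges with the same source have distinct labels. $f_G(v)=\{L_G(x): x$ a right-infinite path starting at $v\}$. For $y\in Y$, $F(y)=\{w\in Y[0,\infty): y_{(-\infty,-1]}w\in Y\}$ with $Y[0,\infty)=\{y_{[0,\infty)}:y\in Y\}$. A vertex $v$ is regular if there is $z\in X_G$ whose edge $z_{-1}$ ends at $v$ and $f_G(v)=F(L_G(z))$; the graph is regular if all vertices are. Follower-separated: $f_G(v)=f_G(w)\Rightarrow v=w$. For a sliding block code $\pi:X\to Y$, $\mathbb U(x)=\{z\in X:\exists N\ \forall i\le N,\ z_i=x_i\}$; $x$ is regular for $\pi$ if $\pi$ maps $\mathbb U(x)$ onto $\mathbb U(\pi(x))$; $\mathcal R(\pi)$ is the set of such points. Future cover $(\mathbb K(Y),L_{\mathbb K(Y)})$: vertices the distinct sets $F(y)$, $y\in Y$, and an edge labeled $a$ from $F(y)$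 to $F(z)$ exactly when $F(z)=\{w\in A^{\mathbb N}: aw\in F(y)\}$ (one edge per such pair and label). A labeled-graph homomorphism is a graph homomorphism preserving labels; it induces a sliding block code on edge shifts. *)

(* Defs.v *)
(* bi-infinite sequences are functions int -> _,
   right-infinite sequences are functions nat -> _, sets are Prop predicates. *)
From mathcomp Require Import all_boot all_order all_algebra.
Set Implicit Arguments. Unset Strict Implicit. Unset Printing Implicit Defensive.
Import GRing.Theory Num.Theory.
Local Open Scope ring_scope.

Section Shifts.
Variables (V E A : Type) (s t : E -> V) (L : E -> A).

Definition edge_shift (x : int -> E) : Prop := forall i : int, t (x i) = s (x (i + 1)).

Definition presented (y : int -> A) : Prop :=
  exists x, edge_shift x /\ y = (fun i => L (x i)).

Definition rpath (x : nat -> E) : Prop := forall n : nat, t (x n) = s (x n.+1).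

Definition follower (v : V) (w : nat -> A) : Prop :=
  exists x, rpath x /\ s (x 0%N) = v /\ w = (fun n => L (x n)).

Definition right_resolving : Prop :=
  forall e e' : E, s e = s e' -> L e = L e' -> e = e'.

Definition follower_separated : Prop :=
  forall v w : V, (forall u, follower v u <-> follower w u) -> v = w.
End Shifts.

Section Futures.
Variables (A : Type) (Y : (int -> A) -> Prop).

Definition rays (w : nat -> A) : Prop := exists y, Y y /\ w = (fun n => y (Posz n)).

Definition concat (y : int -> A) (w : nat -> A) : int -> A :=
  fun i => match i with Posz n => w n | Negz _ => y i end.

Definition future (y : int -> A) (w : nat -> A) : Prop := rays w /\ Y (concat y w).

Definition ncons (a : A) (w : nat -> A) : nat -> A :=
  fun n => match n with 0%N => a | m.+1 => w m end.

(* vertices of the future cover K(Y): the distinct sets F(y), y in Y *)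
Definition KV : Type := {S : (nat -> A) -> Prop | exists y, Y y /\ S = future y}.

(* edges of K(Y): one edge labeled a from S to S' when S' = {w | a w in S} *)
Record KE : Type := MkKE {
  Ksrc : KV; Klab : A; Ktgt : KV;
  Kedge : forall w, proj1_sig Ktgt w <-> proj1_sig Ksrc (ncons Klab w) }.
End Futures.

Definition regular_vertex (V E A : Type) (s t : E -> V) (L : E -> A) (v : V) : Prop :=
  exists z, edge_shift s t z /\ t (z (-1)) = v /\
    (forall w, follower s t L v w <-> future (presented s t L) (fun i => L (z i)) w).

Definition regular_graph (V E A : Type) (s t : E -> V) (L : E -> A) : Prop :=
  forall v, regular_vertex s t L v.

Definition Uset (T : Type) (X : (int -> T) -> Prop) (x z : int -> T) : Prop :=
  X z /\ exists N : int, forall i : int, i <= N -> z i = x i.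

Definition regular_point (T U : Type) (X : (int -> T) -> Prop) (Y : (int -> U) -> Prop)
  (pi : (int -> T) -> (int -> U)) (x : int -> T) : Prop :=
  forall y, Uset Y (pi x) y <-> exists z, Uset X x z /\ pi z = y.

Definition lab_code (E A : Type) (L : E -> A) (x : int -> E) : int -> A := fun i => L (x i).

Definition lab_hom (V E A : Type) (s t : E -> V) (L : E -> A) (Y : (int -> A) -> Prop)
  (thV : V -> KV Y) (thE : E -> KE Y) : Prop :=
  forall e, Ksrc (thE e) = thV (s e) /\ Ktgt (thE e) = thV (t e) /\ Klab (thE e) = L e.

(* Main.v *)
Require Import Defs.
From mathcomp Require Import all_boot all_order all_algebra zify.
From Stdlib Require Import Classical ClassicalEpsilon FunctionalExtensionality PropExtensionality.
Set Implicit Arguments. Unset Strict Implicit. Unset Printing Implicit Defensive.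
Import GRing.Theory Num.Theory.
Local Open Scope ring_scope.

Lemma pigeon_seq (T : eqType) (P : T -> nat -> Prop)
  (mono : forall v n m, (m <= n)%N -> P v n -> P v m) (l : seq T) :
  (forall n, exists v, v \in l /\ P v n) -> exists v, forall n, P v n.
Proof.
elim: l => [|a l IH] H.
  by have [v [] ] := H 0%N.
case: (classic (forall n, P a n)) => [Ha|]; first by exists a.
move/not_all_ex_not => [n0 Hn0]; apply: IH => n.
have [v [vin Pv]] := H (maxn n n0).
exists v; split; last by apply: mono Pv; rewrite leq_maxl.
move: vin; rewrite inE => /orP [/eqP E|//].
by subst v; exfalso; apply: Hn0; apply: mono Pv; rewrite leq_maxr.
Qed.

Lemma pigeon (T : finType) (P : T -> nat -> Prop)
  (mono : forall v n m, (m <= n)%N -> P v n -> P v m) :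
  (forall n, exists v, P v n) -> exists v, forall n, P v n.
Proof.
move=> H; apply: (@pigeon_seq T P mono (enum T)) => n.
by have [v Pv] := H n; exists v; rewrite mem_enum.
Qed.

Definition deep (T : Type) (R : nat -> T -> T -> Prop) k a :=
  forall n, exists c : nat -> T, c 0%N = a /\ forall j, (j < n)%N -> R (k + j)%N (c j) (c j.+1).

Lemma deep_step (T : finType) (R : nat -> T -> T -> Prop) k a :
  deep R k a -> exists b, R k a b /\ deep R k.+1 b.
Proof.
move=> D.
have [b Hb] : exists b, forall n, R k a b /\ exists c : nat -> T, c 0%N = b /\
   forall j, (j < n)%N -> R (k.+1 + j)%N (c j) (c j.+1).
  apply: pigeon.
    move=> v n m mn [Rv [c [c0 Hc]]]; split => //; exists c; split => // j jm.
    by apply: Hc; apply: leq_trans mn.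
  move=> n; have [c [c0 Hc]] := D n.+1.
  exists (c 1%N); split.
    by have := Hc 0%N erefl; rewrite addn0 c0.
  exists (fun j => c j.+1); split => // j jn.
  by have := Hc j.+1 jn; rewrite addSnnS.
exists b; split; first by case: (Hb 0%N).
by move=> n; case: (Hb n).
Qed.

Lemma konig (T : finType) (R : nat -> T -> T -> Prop) (a : T) :
  (forall n, exists c : nat -> T, c 0%N = a /\ forall k, (k < n)%N -> R k (c k) (c k.+1)) ->
  exists c : nat -> T, c 0%N = a /\ forall k, R k (c k) (c k.+1).
Proof.
move=> H.
have ex : forall k b, exists b', deep R k b -> R k b b' /\ deep R k.+1 b'.
  move=> k b; case: (classic (deep R k b)) => [D|nD].
    by have [b' ?] := deep_step D; exists b'.
  by exists b.
pose f k b := proj1_sig (constructive_indefinite_description _ (ex k b)).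
have Hf k b : deep R k b -> R k b (f k b) /\ deep R k.+1 (f k b).
  exact: (proj2_sig (constructive_indefinite_description _ (ex k b))).
pose c := fix c n := if n is m.+1 then f m (c m) else a.
have Dc : forall k, deep R k (c k).
  elim => [|k IH]; first by move=> n; have [c' [? ?]] := H n; exists c'.
  exact: (Hf k _ IH).2.
by exists c; split => // k; exact: (Hf k _ (Dc k)).1.
Qed.
Lemma closed_presented (A V E : finType) (s t : E -> V) (L : E -> A) (y : int -> A) :
 (forall n : nat, exists p, edge_shift s t p /\
     forall i : int, - (n%:Z) <= i <= n%:Z -> L (p i) = y i) -> presented s t L y.
Proof.
move=> H.
have [e0 He0] : exists e0, forall n : nat, exists p, edge_shift s t p /\ p 0 = e0 /\
     forall i : int, - (n%:Z) <= i <= n%:Z -> L (p i) = y i.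
  apply: pigeon.
    move=> v n m mn [p [ep [p0 Hp]]]; exists p; split => //; split => // i Hi.
    by apply: Hp; lia.
  by move=> n; have [p [ep Hp]] := H n; exists (p 0); exists p.
have [cR [cR0 HR]] : exists c : nat -> E, c 0%N = e0 /\
   forall k, (fun k a b => t a = s b /\ L b = y (k.+1)%:Z) k (c k) (c k.+1).
  apply: (@konig E (fun k a b => t a = s b /\ L b = y (k.+1)%:Z) e0) => n.
  have [p [ep [p0 Hp]]] := He0 n.
  exists (fun j => p (Posz j)); split => // k kn; split.
    by have := ep k; have -> : k%:Z + 1 = (k.+1)%:Z by lia.
  by apply: Hp; lia.
have [cL [cL0 HL]] : exists c : nat -> E, c 0%N = e0 /\
   forall k, (fun k a b => t b = s a /\ L b = y (Negz k)) k (c k) (c k.+1).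
  apply: (@konig E (fun k a b => t b = s a /\ L b = y (Negz k)) e0) => n.
  have [p [ep [p0 Hp]]] := He0 n.
  exists (fun j : nat => p (- j%:Z)); split; first by rewrite oppr0.
  move=> k kn; split.
    have := ep (- (k.+1)%:Z); have -> : - (k.+1)%:Z + 1 = - k%:Z by lia.
    done.
  by rewrite NegzE; apply: Hp; lia.
exists (fun i => match i with Posz n => cR n | Negz n => cL n.+1 end); split.
  case=> [n|n].
    by have [h _] := HR n; have -> : n%:Z + 1 = (n.+1)%:Z by lia.
  case: n => [|m].
    by have [h _] := HL 0%N; rewrite /= h cL0 -cR0.
  by have [h _] := HL m.+1; have -> : Negz m.+1 + 1 = Negz m by rewrite !NegzE; lia.
apply: functional_extensionality => -[n|n].
  case: n => [|n]; last by case: (HR n).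
  have [p [ep [p0 Hp]]] := He0 0%N; rewrite cR0 -p0; symmetry; apply: Hp; lia.
by case: (HL n).
Qed.

Lemma future_nonempty (A : Type) (Y : (int -> A) -> Prop) (S : KV Y) :
  exists w, proj1_sig S w.
Proof.
case: S => S [u [Yu HS]]; rewrite /= HS; exists (fun n => u (Posz n)); split.
  by exists u.
have -> : concat u (fun n : nat => u (Posz n)) = u; last by [].
by apply: functional_extensionality => -[].
Qed.

Lemma K_prep (A : Type) (Y : (int -> A) -> Prop) (w : int -> KE Y)
  (ew : edge_shift (@Ksrc A Y) (@Ktgt A Y) w) (a : int) (m : nat) (om : nat -> A) :
  proj1_sig (Ksrc (w (a + m%:Z))) om ->
  proj1_sig (Ksrc (w a)) (fun j => if (j < m)%N then Klab (w (a + j%:Z)) else om (j - m)%N).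
Proof.
elim: m om => [|m IH] om.
  rewrite addr0 => H.
  have -> : (fun j : nat => if (j < 0)%N then Klab (w (a + j%:Z)) else om (j - 0)%N) = om.
    by apply: functional_extensionality => j; rewrite subn0.
  done.
move=> H.
have H1 : proj1_sig (Ksrc (w (a + m%:Z))) (Defs.ncons (Klab (w (a + m%:Z))) om).
  apply/(Kedge (w (a + m%:Z))); rewrite (ew (a + m%:Z)).
  by have -> : a + m%:Z + 1 = a + (m.+1)%:Z by lia.
have := IH _ H1.
have -> : (fun j : nat => if (j < m)%N then Klab (w (a + j%:Z))
           else Defs.ncons (Klab (w (a + m%:Z))) om (j - m)%N) =
          (fun j : nat => if (j < m.+1)%N then Klab (w (a + j%:Z)) else om (j - m.+1)%N).
  apply: functional_extensionality => j.
  case: (ltngtP j m) => [jm|mj|->].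
  - by rewrite ltnS ltnW.
  - have -> : (j < m.+1)%N = false by lia.
    by case E: (j - m)%N => [|k] /=; [exfalso; lia | congr om; lia].
  - by rewrite ltnSn subnn.
done.
Qed.

Lemma K_sub (A V E : finType) (s t : E -> V) (L : E -> A)
  (w : int -> KE (presented s t L)) :
  edge_shift (@Ksrc A _) (@Ktgt A _) w -> presented s t L (fun i => Klab (w i)).
Proof.
move=> ew; apply: closed_presented => n.
pose a := - n%:Z.
have [om Hom] := future_nonempty (Ksrc (w (a + (n.*2.+1)%:Z))).
have := K_prep ew Hom.
case: (Ksrc (w a)) => S [u [Yu HS]]; rewrite /= HS => -[_ [q [eq Hq]]].
exists (fun i => q (i + n%:Z)); split.
  move=> i; have := eq (i + n%:Z).
  by have -> : i + 1 + n%:Z = i + n%:Z + 1 by lia.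
move=> i Hi.
have [k Hk] : exists k : nat, i + n%:Z = k%:Z by exists (absz (i + n%:Z)); lia.
rewrite Hk.
have := congr1 (fun f => f (Posz k)) Hq => /= <-.
have -> : (k < n.*2.+1)%N by lia.
by have -> : a + k%:Z = i by rewrite /a; lia.
Qed.
Lemma fol_KV (A V E : finType) (s t : E -> V) (L : E -> A)
  (Hreg : regular_graph s t L) (v : V) :
  exists y, presented s t L y /\ follower s t L v = future (presented s t L) y.
Proof.
have [z [ez [_ Hz]]] := Hreg v.
exists (fun i => L (z i)); split; first by exists z.
apply: functional_extensionality => w; apply: propositional_extensionality; exact: Hz.
Qed.

Definition thV_def (A V E : finType) (s t : E -> V) (L : E -> A)
  (Hreg : regular_graph s t L) (v : V) : KV (presented s t L) :=
  exist _ (follower s t L v) (fol_KV Hreg v).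

Lemma kedge_pf (A V E : finType) (s t : E -> V) (L : E -> A)
  (Hrr : right_resolving s L) (e : E) :
  forall w, follower s t L (t e) w <-> follower s t L (s e) (Defs.ncons (L e) w).
Proof.
move=> w; split.
  move=> [x [px [x0 ->]]].
  exists (fun n => if n is m.+1 then x m else e); split; last split => //.
    by case=> [|m] //=; rewrite x0.
  by apply: functional_extensionality => -[].
move=> [x [px [x0 Hw]]].
have Lx0 : L (x 0%N) = L e by have := congr1 (fun f => f 0%N) Hw.
have xe : x 0%N = e by apply: Hrr.
exists (fun n => x n.+1); split; first by move=> n; apply: px.
split; first by rewrite -(px 0%N) xe.
by apply: functional_extensionality => n; have := congr1 (fun f => f n.+1) Hw.
Qed.

Definition thE_def (A V E : finType) (s t : E -> V) (L : E -> A)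
  (Hrr : right_resolving s L) (Hreg : regular_graph s t L) (e : E) : KE (presented s t L) :=
  @MkKE A (presented s t L) (thV_def Hreg (s e)) (L e) (thV_def Hreg (t e)) (@kedge_pf A V E s t L Hrr e).

Theorem lemma2p18 (A V E : finType) (s t : E -> V) (L : E -> A)
  (no_sink : forall v : V, exists e : E, s e = v)
  (no_source : forall v : V, exists e : E, t e = v)
  (Hrr : right_resolving s L)
  (Hreg : regular_graph s t L) :
  exists (thV : V -> KV (presented s t L)) (thE : E -> KE (presented s t L)),
    lab_hom s t L thV thE /\
    (forall x : int -> E, edge_shift s t x ->
       regular_point (edge_shift s t) (presented s t L) (lab_code L) x ->
       regular_point (edge_shift (@Ksrc A (presented s t L)) (@Ktgt A (presented s t L)))
         (presented (@Ksrc A (presented s t L)) (@Ktgt A (presented s t L)) (@Klab A (presented s t L)))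
         (lab_code (@Klab A (presented s t L))) (fun i => thE (x i))) /\
    (follower_separated s t L -> injective thV /\ injective thE).
Proof.
exists (thV_def Hreg), (thE_def Hrr Hreg).
split; first by [].
split.
  move=> x ex Hx y; split.
    move=> [[w [ew ->]] [N HN]].
    have Yy : presented s t L (fun i => Klab (w i)) by apply: K_sub.
    have [z [[ez [N' HN']] Hz]] : exists z, Uset (edge_shift s t) x z /\ lab_code L z = (fun i => Klab (w i)).
      by apply/Hx; split => //; exists N.
    exists (fun i => thE_def Hrr Hreg (z i)); split.
      split; last by exists N'; move=> i Hi; rewrite HN'.
      by move=> i; rewrite /= (ez i).
    exact: Hz.
  move=> [z [[ez [N HN]] <-]]; split; first by exists z.
  by exists N => i Hi; rewrite /lab_code HN.
move=> Hsep.
have iV : injective (thV_def Hreg).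
  move=> v v' H; apply: Hsep => u.
  by have := congr1 (fun S => proj1_sig S u) H => /= ->.
split => // e e' H.
apply: (Hrr e e').
  by apply: iV; have := congr1 (@Ksrc A _) H.
by have := congr1 (@Klab A _) H.
Qed.
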